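(* There exist a constant $c>0$ and infinitely many $n\in\mathbb{N}$ such that for each of them there is a connected graph $G$ on $n$ vertices and vertices $a,b\in V(G)$ such that, in the geodesic-biased random walk on $G$ with target $b$ and excited set $\mathcal{X}=\{a\}$, started at $a$ (for any choice of the fixed shortest paths), \[\mathbb{E}[\tau_a(b,\{a\})]\ \ge\ c\,\exp\left(\frac{\sqrt[4]{n}\,\log n}{100}\right).\]
   Context: Geodesic-biased random walk: let $G$ be a finite connected graph, $b\in V(G)$ a target vertex and $\mathcal{X}\subseteq V(G)$ a set of excited vertices. For every vertex $x\neq b$ fix in advance one shortest path (geodesic) in $G$ from $x$ to $b$. A walker moves in discrete time: from an unexcited vertex ($x\notin\mathcal{X}$) she moves to a uniformly random neighbour of $x$; from an excited vertex ($x\in\mathcal{X}$) she moves deterministically to the next vertex on the fixed shortest path from $x$ to $b$. $\tau_a(b,\mathcal{X})$ denotes the first time the walker started at $a$ visits $b$. *)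

(* Defs.v *)
From Stdlib Require Import Bool Reals List Arith.
Import ListNotations.
Open Scope R_scope.

Definition fsum (n : nat) (f : nat -> R) : R :=
  fold_right Rplus 0 (map f (seq 0 n)).

Definition simple_graph (n : nat) (adj : nat -> nat -> bool) : Prop :=
  (forall x y, adj x y = true -> (x < n)%nat /\ (y < n)%nat) /\
  (forall x y, adj x y = adj y x) /\
  (forall x, adj x x = false).

(* [walk adj x l] : x :: l is a walk in the graph (consecutive vertices adjacent).
   Its length (number of edges) is [length l] and it ends at [last l x]. *)
Fixpoint walk (adj : nat -> nat -> bool) (x : nat) (l : list nat) : Prop :=
  match l with
  | nil => True
  | y :: l' => adj x y = true /\ walk adj y l'
  end.

Definition connected (n : nat) (adj : nat -> nat -> bool) : Prop :=
  forall x y, (x < n)%nat -> (y < n)%nat ->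
    exists l, walk adj x l /\ last l x = y.

Definition geodesic (adj : nat -> nat -> bool) (x b : nat) (l : list nat) : Prop :=
  walk adj x l /\ last l x = b /\
  forall l', walk adj x l' -> last l' x = b -> (length l <= length l')%nat.

Definition geodesic_system (n : nat) (adj : nat -> nat -> bool) (b : nat)
    (gp : nat -> list nat) : Prop :=
  forall x, (x < n)%nat -> x <> b -> geodesic adj x b (gp x).

Definition deg (n : nat) (adj : nat -> nat -> bool) (x : nat) : R :=
  fsum n (fun y => if adj x y then 1 else 0).

Definition trans (n : nat) (adj : nat -> nat -> bool) (b : nat)
    (X : nat -> bool) (gp : nat -> list nat) (x y : nat) : R :=
  if X x then (if Nat.eqb y (hd b (gp x)) then 1 else 0)
  else (if adj x y then / deg n adj x else 0).

(* [surv ... t y] = P(X_t = y and tau_a(b,X) > t) for the walk started at a. *)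
Fixpoint surv (n : nat) (adj : nat -> nat -> bool) (b : nat)
    (X : nat -> bool) (gp : nat -> list nat) (a : nat) (t : nat) : nat -> R :=
  match t with
  | O => fun y => if Nat.eqb y a && negb (Nat.eqb a b) then 1 else 0
  | S t' => let q := surv n adj b X gp a t' in
      fun y => if Nat.eqb y b then 0
               else fsum n (fun x => q x * trans n adj b X gp x y)
  end.

Definition tail_prob (n : nat) (adj : nat -> nat -> bool) (b : nat)
    (X : nat -> bool) (gp : nat -> list nat) (a : nat) (t : nat) : R :=
  fsum n (surv n adj b X gp a t).

(* [expected_hitting_time ... E] : E[tau_a(b,X)] = E, via
   E[tau] = sum_{t >= 0} P(tau > t) (series converging to E). *)
Definition expected_hitting_time (n : nat) (adj : nat -> nat -> bool) (b : nat)
    (X : nat -> bool) (gp : nat -> list nat) (a : nat) (E : R) : Prop :=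
  infinite_sum (tail_prob n adj b X gp a) E.

(* Main.v *)
Require Import Defs.
From Stdlib Require Import Reals List Arith Lia Lra Bool.
Import ListNotations.
Open Scope R_scope.


Lemma fsum_0 f : fsum 0 f = 0.
Proof. reflexivity. Qed.

Lemma fsum_S n f : fsum (S n) f = fsum n f + f n.
Proof.
  unfold fsum. rewrite seq_S, map_app, fold_right_app. simpl.
  generalize (f n). intro c.
  induction (map f (seq 0 n)) as [|h t IH]; simpl; [lra|rewrite IH; lra].
Qed.

Lemma fsum_ext n f g : (forall y, (y < n)%nat -> f y = g y) -> fsum n f = fsum n g.
Proof.
  induction n; intros H; [reflexivity|]. rewrite !fsum_S, IHn, H; auto; intros; apply H; lia.
Qed.

Lemma fsum_plus n f g : fsum n (fun y => f y + g y) = fsum n f + fsum n g.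
Proof. induction n; [simpl; unfold fsum; simpl; lra|rewrite !fsum_S, IHn; lra]. Qed.

Lemma fsum_scal n c f : c * fsum n f = fsum n (fun y => c * f y).
Proof. induction n; [unfold fsum; simpl; lra|rewrite !fsum_S, <- IHn; lra]. Qed.

Lemma fsum_const n c : fsum n (fun _ => c) = INR n * c.
Proof. induction n; [unfold fsum; simpl; lra|rewrite fsum_S, IHn, S_INR; lra]. Qed.

Lemma fsum_le n f g : (forall y, (y < n)%nat -> f y <= g y) -> fsum n f <= fsum n g.
Proof. induction n; intros H; [unfold fsum; simpl; lra|rewrite !fsum_S].
  assert (fsum n f <= fsum n g) by (apply IHn; intros; apply H; lia).
  specialize (H n ltac:(lia)); lra. Qed.

Lemma fsum_nonneg n f : (forall y, (y < n)%nat -> 0 <= f y) -> 0 <= fsum n f.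
Proof. intros H. replace 0 with (fsum n (fun _ => 0)).
  apply fsum_le; auto. rewrite fsum_const; lra. Qed.

Lemma fsum_swap n m (F : nat -> nat -> R) :
  fsum n (fun y => fsum m (fun x => F x y)) = fsum m (fun x => fsum n (fun y => F x y)).
Proof.
  induction n.
  - rewrite fsum_0. symmetry. replace 0 with (fsum m (fun _ => 0)).
    apply fsum_ext; intros; reflexivity. rewrite fsum_const; lra.
  - rewrite fsum_S, IHn, <- fsum_plus. apply fsum_ext; intros; rewrite fsum_S; reflexivity.
Qed.

Lemma fsum_point n z c : (z < n)%nat -> fsum n (fun y => if Nat.eqb y z then c else 0) = c.
Proof.
  induction n; intros H; [lia|]. rewrite fsum_S.
  destruct (Nat.eq_dec z n).
  - subst. rewrite Nat.eqb_refl. replace (fsum n _) with (fsum n (fun _ => 0)).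
    rewrite fsum_const; lra. apply fsum_ext; intros y Hy.
    destruct (Nat.eqb_spec y n); [lia|auto].
  - rewrite IHn by lia. destruct (Nat.eqb_spec n z); [lia|lra].
Qed.

Lemma fsum_add n p f : fsum (n + p) f = fsum n f + fsum p (fun j => f (n + j)%nat).
Proof.
  induction p. - rewrite Nat.add_0_r, fsum_0; lra.
  - rewrite Nat.add_succ_r, !fsum_S, IHp; lra.
Qed.

Lemma fsum_term n F z : (z < n)%nat -> (forall y, (y < n)%nat -> 0 <= F y) -> F z <= fsum n F.
Proof.
  intros Hz H. rewrite <- (fsum_point n z (F z)) by auto. apply fsum_le.
  intros y Hy. destruct (Nat.eqb_spec y z); subst; auto. lra.
Qed.

Lemma fsum_one n F z : (z < n)%nat -> (forall y, (y < n)%nat -> y <> z -> 0 <= F y) ->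
  F z <= fsum n F.
Proof.
  intros Hz H. rewrite <- (fsum_point n z (F z)) by auto. apply fsum_le.
  intros y Hy. destruct (Nat.eqb_spec y z); subst; [lra|]. apply H; auto.
Qed.

Lemma fsum_two n F z w : (z < n)%nat -> (w < n)%nat -> z <> w ->
  (forall y, (y < n)%nat -> y <> z -> y <> w -> 0 <= F y) ->
  F z + F w <= fsum n F.
Proof.
  intros Hz Hw Hzw H. rewrite <- (fsum_point n z (F z)) by auto.
  rewrite <- (fsum_point n w (F w)) by auto. rewrite <- fsum_plus. apply fsum_le.
  intros y Hy. destruct (Nat.eqb_spec y z); destruct (Nat.eqb_spec y w); subst; try lia; try lra.
  specialize (H y Hy n0 n1); lra.
Qed.

Lemma fsum_block n F z s m : (z < n)%nat -> (s + m <= n)%nat -> (z < s \/ s + m <= z)%nat ->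
  (forall y, (y < n)%nat -> y <> z -> ~ (s <= y < s + m)%nat -> 0 <= F y) ->
  F z + fsum m (fun j => F (s + j)%nat) <= fsum n F.
Proof.
  intros Hz Hs Hzs H.
  set (B := fun y => if andb (Nat.leb s y) (Nat.ltb y (s+m)) then F y else 0).
  assert (HB : fsum n B = fsum m (fun j => F (s + j)%nat)).
  { replace n with (s + m + (n - s - m))%nat by lia.
    rewrite !fsum_add.
    replace (fsum s B) with (fsum s (fun _ => 0)).
    2:{ apply fsum_ext; intros y Hy; unfold B. destruct (Nat.leb_spec s y); [lia|reflexivity]. }
    replace (fsum (n-s-m) _) with (fsum (n-s-m) (fun _ => 0)).
    2:{ apply fsum_ext; intros y Hy; unfold B. destruct (Nat.ltb_spec (s + m + y) (s+m)); [lia|].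
        rewrite Bool.andb_false_r; reflexivity. }
    rewrite !fsum_const. replace (fsum m (fun j => F (s+j)%nat)) with (fsum m (fun j => B (s+j)%nat)). lra.
    apply fsum_ext; intros y Hy; unfold B.
    destruct (Nat.leb_spec s (s+y)); [|lia]. destruct (Nat.ltb_spec (s+y) (s+m)); [|lia]. reflexivity. }
  rewrite <- HB, <- (fsum_point n z (F z)) by auto. rewrite <- fsum_plus. apply fsum_le.
  intros y Hy. unfold B. destruct (Nat.eqb_spec y z).
  - subst. destruct (Nat.leb_spec s z); destruct (Nat.ltb_spec z (s+m)); simpl; try lia; lra.
  - destruct (Nat.leb_spec s y); destruct (Nat.ltb_spec y (s+m)); simpl; try lra.
    all: specialize (H y Hy n0 ltac:(lia)); lra.
Qed.

Lemma last_cons {A} (l : list A) y x : last (y :: l) x = last l y.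
Proof. revert x y; induction l; intros x y; [reflexivity|]. change (last (a :: l) x = last (a :: l) y). rewrite !IHl; reflexivity. Qed.

Lemma walk_app adj x l1 l2 : walk adj x (l1 ++ l2) <-> walk adj x l1 /\ walk adj (last l1 x) l2.
Proof.
  revert x; induction l1 as [|y l1 IH]; intros x; [simpl; tauto|].
  rewrite last_cons. rewrite <- app_comm_cons. change (walk adj x (y :: (l1 ++ l2))) with (adj x y = true /\ walk adj y (l1 ++ l2)).
  change (walk adj x (y :: l1)) with (adj x y = true /\ walk adj y l1).
  rewrite IH. tauto.
Qed.

Lemma last_app {A} (l1 l2 : list A) x : last (l1 ++ l2) x = last l2 (last l1 x).
Proof. revert x; induction l1 as [|y l1 IH]; intros x; [reflexivity|].
  rewrite <- app_comm_cons, !last_cons. apply IH. Qed.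

Definition reach adj x y := exists l, walk adj x l /\ last l x = y.

Lemma reach_refl adj x : reach adj x x.
Proof. exists []; simpl; auto. Qed.

Lemma reach_trans adj x y z : reach adj x y -> reach adj y z -> reach adj x z.
Proof.
  intros [l1 [H1 E1]] [l2 [H2 E2]]. exists (l1 ++ l2). rewrite walk_app, last_app, E1. subst; auto.
Qed.

Lemma reach_edge adj x y : adj x y = true -> reach adj x y.
Proof. intros H. exists [y]; simpl; auto. Qed.

Lemma reach_sym adj : (forall x y, adj x y = adj y x) -> forall x y, reach adj x y -> reach adj y x.
Proof.
  intros Hs x y [l [H E]]. revert x H E. induction l as [|z l IH]; intros x H E.
  - simpl in E; subst; apply reach_refl.
  - destruct H as [Hxz Hw]. assert (last l z = y) by (rewrite last_cons in E; exact E).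
    apply reach_trans with z; auto. apply reach_edge; rewrite Hs; auto.
Qed.

Lemma walk_lb adj (phi : nat -> nat) b :
  (forall x y, adj x y = true -> (phi x <= phi y + 1)%nat) -> phi b = 0%nat ->
  forall l x, walk adj x l -> last l x = b -> (phi x <= length l)%nat.
Proof.
  intros Hl Hb l. induction l as [|z l IH]; intros x H E.
  - simpl in E; subst; lia.
  - destruct H as [Hxz Hw]. assert (last l z = b) by (rewrite last_cons in E; exact E).
    specialize (IH z Hw H). specialize (Hl _ _ Hxz). simpl; lia.
Qed.

Definition Top n adj b gp a (phi : nat -> R) x :=
  fsum n (fun y => trans n adj b (fun z => Nat.eqb z a) gp x y * phi y).

Lemma deg_ge_term n adj x y : (y < n)%nat -> adj x y = true -> 1 <= deg n adj x.
Proof.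
  intros Hy H. unfold deg.
  apply (Rle_trans _ ((fun z => if adj x z then 1 else 0) y)). rewrite H; lra.
  apply (fsum_term n (fun z => if adj x z then 1 else 0) y); auto. intros; destruct (adj x y0); lra.
Qed.

Lemma deg_le n adj x : deg n adj x <= INR n.
Proof. unfold deg. rewrite <- (Rmult_1_r (INR n)), <- fsum_const. apply fsum_le.
  intros; destruct (adj x y); lra. Qed.

Lemma deg_nonneg n adj x : 0 <= deg n adj x.
Proof. unfold deg. apply fsum_nonneg. intros; destruct (adj x y); lra. Qed.

Lemma trans_nonneg n adj b gp a x y :
  (forall x y, adj x y = true -> (y < n)%nat) ->
  0 <= trans n adj b (fun z => Nat.eqb z a) gp x y.
Proof.
  intros Ha. unfold trans. destruct (Nat.eqb x a). destruct (Nat.eqb y _); lra.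
  destruct (adj x y) eqn:E; [|lra]. left; apply Rinv_0_lt_compat.
  pose proof (deg_ge_term n adj x y (Ha _ _ E) E); lra.
Qed.

Lemma surv_nonneg n adj b gp a :
  (forall x y, adj x y = true -> (y < n)%nat) ->
  forall t y, 0 <= surv n adj b (fun z => Nat.eqb z a) gp a t y.
Proof.
  intros Ha t. induction t; intros y; simpl.
  - destruct (Nat.eqb y a && negb (Nat.eqb a b))%bool; lra.
  - destruct (Nat.eqb y b); [lra|]. apply fsum_nonneg. intros x _.
    apply Rmult_le_pos; auto. apply trans_nonneg; auto.
Qed.

Lemma surv_b n adj b gp a t : surv n adj b (fun z => Nat.eqb z a) gp a t b = 0.
Proof.
  destruct t; simpl.
  - destruct (Nat.eqb_spec b a); subst; simpl; [rewrite Nat.eqb_refl; simpl; lra|lra].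
  - rewrite Nat.eqb_refl; lra.
Qed.

Lemma drift_id n adj b gp a (phi : nat -> R) t : phi b = 0 ->
  fsum n (fun y => surv n adj b (fun z => Nat.eqb z a) gp a (S t) y * phi y) =
  fsum n (fun x => surv n adj b (fun z => Nat.eqb z a) gp a t x * Top n adj b gp a phi x).
Proof.
  intros Hb. set (q := surv n adj b (fun z => Nat.eqb z a) gp a t).
  set (tr := trans n adj b (fun z => Nat.eqb z a) gp).
  transitivity (fsum n (fun y => fsum n (fun x => q x * tr x y * phi y))).
  - apply fsum_ext. intros y _. simpl. fold q. fold tr.
    destruct (Nat.eqb_spec y b).
    + subst. rewrite Hb. rewrite Rmult_0_l. replace 0 with (fsum n (fun _ => 0)) at 1.
      apply fsum_ext; intros; lra. rewrite fsum_const; lra.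
    + rewrite Rmult_comm, fsum_scal. apply fsum_ext; intros; lra.
  - rewrite fsum_swap. apply fsum_ext. intros x _. unfold Top. fold tr.
    rewrite fsum_scal. apply fsum_ext; intros; lra.
Qed.

Lemma Top_nonexc n adj b gp a phi x : x <> a ->
  Top n adj b gp a phi x = fsum n (fun y => if adj x y then phi y else 0) * / deg n adj x.
Proof.
  intros Hx. unfold Top, trans. destruct (Nat.eqb_spec x a); [lia|].
  rewrite Rmult_comm, fsum_scal. apply fsum_ext; intros; destruct (adj x y); lra.
Qed.

Lemma Top_exc n adj b gp a phi : (hd b (gp a) < n)%nat ->
  Top n adj b gp a phi a = phi (hd b (gp a)).
Proof.
  intros H. unfold Top, trans. rewrite Nat.eqb_refl.
  rewrite <- (fsum_point n (hd b (gp a)) (phi (hd b (gp a)))) by auto.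
  apply fsum_ext; intros y _. destruct (Nat.eqb_spec y (hd b (gp a))); subst; lra.
Qed.

Lemma tail_le1 n adj b gp a :
  (forall x y, adj x y = true -> (y < n)%nat) -> (a < n)%nat -> a <> b ->
  (hd b (gp a) < n)%nat ->
  forall t, tail_prob n adj b (fun z => Nat.eqb z a) gp a t <= 1.
Proof.
  intros Ha Han Hab Hc t. unfold tail_prob. induction t.
  - simpl. replace (fsum n _) with (fsum n (fun y => if Nat.eqb y a then 1 else 0)).
    rewrite fsum_point; auto; lra. apply fsum_ext; intros y _.
    destruct (Nat.eqb_spec a b); [lia|]. rewrite Bool.andb_true_r. reflexivity.
  - set (psi := fun y => if Nat.eqb y b then 0 else 1).
    transitivity (fsum n (fun y => surv n adj b (fun z => Nat.eqb z a) gp a (S t) y * psi y)).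
    + right. apply fsum_ext. intros y _. unfold psi. destruct (Nat.eqb_spec y b).
      subst; rewrite surv_b; lra. lra.
    + rewrite drift_id by (unfold psi; rewrite Nat.eqb_refl; auto).
      eapply Rle_trans; [|apply IHt]. apply fsum_le. intros x _.
      rewrite <- (Rmult_1_r (surv _ _ _ _ _ _ _ x)) at 2.
      apply Rmult_le_compat_l; [apply surv_nonneg; auto|].
      destruct (Nat.eqb_spec x a).
      * subst. rewrite Top_exc; auto. unfold psi. destruct (Nat.eqb _ _); lra.
      * rewrite Top_nonexc by auto.
        assert (HS: 0 <= fsum n (fun y => if adj x y then psi y else 0) <= deg n adj x).
        { split. apply fsum_nonneg; intros; unfold psi; destruct (adj x y), (Nat.eqb y b); lra.
          unfold deg; apply fsum_le; intros; unfold psi; destruct (adj x y), (Nat.eqb y b); lra. }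
        destruct (Req_dec (deg n adj x) 0) as [E|E].
        -- rewrite E in HS. replace (fsum _ _) with 0 by lra. lra.
        -- pose proof (deg_nonneg n adj x).
           apply (Rmult_le_reg_r (deg n adj x)); [lra|]. rewrite Rmult_assoc, Rinv_l; lra.
Qed.

Lemma surv0_sum n adj b gp a phi : (a < n)%nat -> a <> b ->
  fsum n (fun y => surv n adj b (fun z => Nat.eqb z a) gp a 0 y * phi y) = phi a.
Proof.
  intros Han Hab. rewrite <- (fsum_point n a (phi a)) by auto. apply fsum_ext. intros y _. simpl.
  destruct (Nat.eqb_spec a b); [lia|]. rewrite Bool.andb_true_r.
  destruct (Nat.eqb_spec y a); subst; lra.
Qed.

Lemma fsum_lin n (f g : nat -> R) c :
  fsum n (fun x => f x * (g x + c)) = fsum n (fun x => f x * g x) + c * fsum n f.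
Proof. rewrite fsum_scal, <- fsum_plus. apply fsum_ext; intros; ring. Qed.

Lemma lower_gen n adj b gp a (u : nat -> R) (delta : R) :
  (forall x y, adj x y = true -> (y < n)%nat) -> (a < n)%nat -> a <> b ->
  (hd b (gp a) < n)%nat -> u b = 0 -> (forall y, (y < n)%nat -> u y <= 1) -> u a = 1 ->
  0 <= delta -> 1 - delta <= u (hd b (gp a)) ->
  (forall x, (x < n)%nat -> x <> b -> x <> a -> u x - delta <= Top n adj b gp a u x) ->
  forall t, 1 - INR t * delta <= tail_prob n adj b (fun z => Nat.eqb z a) gp a t.
Proof.
  intros Ha Han Hab Hc Hub Hu1 Hua Hd Huc Hdr.
  set (S := fun t => fsum n (fun y => surv n adj b (fun z => Nat.eqb z a) gp a t y * u y)).
  assert (HS : forall t, 1 - INR t * delta <= S t).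
  { induction t.
    - unfold S. rewrite surv0_sum; auto. simpl; lra.
    - unfold S. rewrite drift_id by auto.
      apply Rle_trans with (fsum n (fun x => surv n adj b (fun z => Nat.eqb z a) gp a t x * (u x + - delta))).
      + rewrite fsum_lin. fold (S t).
        pose proof (tail_le1 n adj b gp a Ha Han Hab Hc t). unfold tail_prob in H.
        rewrite S_INR. nra.
      + apply fsum_le. intros x Hx.
        destruct (Nat.eq_dec x b). { subst. rewrite surv_b. lra. }
        apply Rmult_le_compat_l; [apply surv_nonneg; auto|].
        destruct (Nat.eq_dec x a).
        * subst. rewrite Top_exc; auto. lra.
        * specialize (Hdr x Hx n0 n1); lra. }
  intros t. eapply Rle_trans; [apply HS|]. unfold S, tail_prob. apply fsum_le.
  intros y Hy. pose proof (surv_nonneg n adj b gp a Ha t y). pose proof (Hu1 y Hy). nra.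
Qed.

Lemma upper_gen n adj b gp a (w : nat -> R) (eps : R) :
  (forall x y, adj x y = true -> (y < n)%nat) -> (a < n)%nat -> a <> b ->
  w b = 0 -> (forall y, (y < n)%nat -> 0 <= w y) -> 0 < eps ->
  (forall x, (x < n)%nat -> x <> b -> Top n adj b gp a w x <= w x - eps) ->
  forall t, sum_f_R0 (tail_prob n adj b (fun z => Nat.eqb z a) gp a) t <= w a / eps.
Proof.
  intros Ha Han Hab Hwb Hw Heps Hdr.
  set (W := fun t => fsum n (fun y => surv n adj b (fun z => Nat.eqb z a) gp a t y * w y)).
  assert (HW0 : forall t, 0 <= W t).
  { intros t; apply fsum_nonneg; intros y Hy. apply Rmult_le_pos; auto. apply surv_nonneg; auto. }
  assert (Hstep : forall t, W (S t) <= W t - eps * tail_prob n adj b (fun z => Nat.eqb z a) gp a t).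
  { intros t. unfold W. rewrite drift_id by auto.
    apply Rle_trans with (fsum n (fun x => surv n adj b (fun z => Nat.eqb z a) gp a t x * (w x + - eps))).
    - apply fsum_le. intros x Hx.
      destruct (Nat.eq_dec x b). { subst. rewrite surv_b. lra. }
      apply Rmult_le_compat_l; [apply surv_nonneg; auto|]. specialize (Hdr x Hx n0); lra.
    - rewrite fsum_lin. unfold tail_prob. lra. }
  assert (H : forall t, W (S t) + eps * sum_f_R0 (tail_prob n adj b (fun z => Nat.eqb z a) gp a) t <= w a).
  { induction t.
    - simpl. specialize (Hstep 0%nat). unfold W at 2 in Hstep. rewrite surv0_sum in Hstep; auto. lra.
    - simpl. specialize (Hstep (S t)). lra. }
  intros t. specialize (H t). specialize (HW0 (S t)).
  apply (Rmult_le_reg_l eps); auto. unfold Rdiv. rewrite <- Rmult_assoc, (Rmult_comm eps (w a)), Rmult_assoc, Rinv_r; lra.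
Qed.

Lemma exp_le_mono x y : x <= y -> exp x <= exp y.
Proof. intros [H|H]; [left; apply exp_increasing; auto|subst; lra]. Qed.

Lemma ln_le_mono x y : 0 < x -> x <= y -> ln x <= ln y.
Proof. intros Hx [H|H]; [left; apply ln_increasing; auto|subst; lra]. Qed.

Lemma final_sum (tail : nat -> R) (B : R) (D : nat) :
  (forall t, 0 <= tail t) -> (forall t, sum_f_R0 tail t <= B) -> (1 <= D)%nat ->
  (forall t, 1 - INR t / INR D <= tail t) ->
  exists E, infinite_sum tail E /\ E >= INR D / 4.
Proof.
  intros Hnn Hb HD Hlow.
  assert (Hg : Un_growing (sum_f_R0 tail)). { intros t; simpl; pose proof (Hnn (S t)); lra. }
  assert (Hub : has_ub (sum_f_R0 tail)). { exists B. intros r [i ->]. apply Hb. }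
  destruct (growing_cv _ Hg Hub) as [E HE]. exists E. split; [exact HE|].
  set (T := Nat.div2 D).
  pose proof (growing_ineq _ _ Hg HE T).
  assert (HT : (2 * T <= D /\ D <= 2 * T + 1)%nat).
  { unfold T. pose proof (Nat.div2_odd D). destruct (Nat.odd D); simpl in *; lia. }
  assert (HD' : 1 <= INR D) by (apply (le_INR 1); auto).
  assert (H2T : 2 * INR T <= INR D /\ INR D <= 2 * INR T + 1).
  { destruct HT as [H1 H2]. apply le_INR in H1, H2. rewrite mult_INR in H1. rewrite plus_INR, mult_INR in H2.
    replace (INR 2) with 2 in * by (simpl; lra). replace (INR 1) with 1 in * by (simpl; lra). lra. }
  assert (sum_f_R0 (fun _ => 1/2) T <= sum_f_R0 tail T).
  { apply sum_Rle. intros k Hk. eapply Rle_trans; [|apply Hlow].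
    apply le_INR in Hk. apply (Rmult_le_reg_r (INR D)); [lra|].
    replace ((1 - INR k / INR D) * INR D) with (INR D - INR k) by (field; apply Rgt_not_eq; lra). lra. }
  rewrite sum_cte, S_INR in H0. lra.
Qed.

Lemma real_bound (k n : nat) : (2 <= k)%nat -> (1 <= n)%nat -> (n <= k ^ 4)%nat ->
  exp (Rpower (INR n) (1/4) * ln (INR n) / 100) <= INR ((k+1) ^ (k-1)).
Proof.
  intros Hk Hn1 Hnk.
  assert (Hk' : 2 <= INR k) by (apply (le_INR 2); auto).
  assert (Hn' : 1 <= INR n) by (apply (le_INR 1); auto).
  assert (Hnk' : INR n <= INR k ^ 4) by (rewrite <- pow_INR; apply le_INR; auto).
  assert (Hln : ln (INR n) <= 4 * ln (INR k)).
  { replace (4 * ln (INR k)) with (INR 4 * ln (INR k)) by (simpl; ring).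
    rewrite <- ln_pow by lra. apply ln_le_mono; lra. }
  assert (Hln0 : 0 <= ln (INR n)) by (rewrite <- ln_1; apply ln_le_mono; lra).
  assert (HlnK : 0 <= ln (INR k)) by (rewrite <- ln_1; apply ln_le_mono; lra).
  assert (HlnK1 : ln (INR k) <= ln (INR (k+1))) by (apply ln_le_mono; [lra|apply le_INR; lia]).
  assert (HR : Rpower (INR n) (1/4) <= INR k).
  { unfold Rpower. rewrite <- (exp_ln (INR k)) by lra. apply exp_le_mono. lra. }
  assert (HR0 : 0 < Rpower (INR n) (1/4)) by (unfold Rpower; apply exp_pos).
  assert (Hkm : INR (k - 1) = INR k - 1) by (rewrite minus_INR by lia; simpl; ring).
  rewrite pow_INR, <- (exp_ln (INR (k+1) ^ (k-1))).
  2:{ apply pow_lt. apply lt_INR_0; lia. }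
  apply exp_le_mono. rewrite ln_pow by (apply lt_INR_0; lia). rewrite Hkm.
  assert (Rpower (INR n) (1/4) * ln (INR n) <= INR k * (4 * ln (INR k))).
  { apply Rmult_le_compat; lra. }
  assert (INR k * (4 * ln (INR k)) / 100 <= (INR k - 1) * ln (INR k)) by nra.
  assert ((INR k - 1) * ln (INR k) <= (INR k - 1) * ln (INR (k+1))) by (apply Rmult_le_compat_l; lra).
  lra.
Qed.
Close Scope R_scope.

Definition mm (k : nat) := k * k.
Definition MM (k : nat) := (k - 1) * (k * k).
Definition nn (k : nat) := k + 1 + (k - 1) * MM k.
Definition g (k l r j : nat) := k + 1 + l * MM k + r * mm k + j.
Definition lpos (k x : nat) := (x - (k + 1)) / MM k.
Definition rpos (k x : nat) := ((x - (k + 1)) mod MM k) / mm k + 1.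
Definition gnd (k x : nat) := (k + 1 <=? x) && (x <? nn k).
Definition down (k x : nat) := if lpos k x =? 0 then rpos k x else x - MM k.
Definition top (k x : nat) := lpos k x =? k - 2.
Definition E (k x y : nat) :=
  ((x =? y + 1) && (y <? k)) || (gnd k x && (y =? down k x)) || (gnd k x && top k x && (y =? k)).
Definition adj (k x y : nat) := E k x y || E k y x.

Definition valid k l r j := (l <= k - 2 /\ r <= k - 2 /\ j < k * k)%nat.

Lemma code k l r j : (2 <= k)%nat -> valid k l r j ->
  lpos k (g k l r j) = l /\ rpos k (g k l r j) = r + 1 /\ gnd k (g k l r j) = true.
Proof.
  intros Hk [Hl [Hr Hj]]. unfold lpos, rpos, gnd, g, nn, MM, mm.
  replace (k + 1 + l * ((k - 1) * (k * k)) + r * (k * k) + j - (k + 1))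
    with ((k - 1) * (k * k) * l + (r * (k * k) + j)) by lia.
  assert (Hb : r * (k * k) + j < (k - 1) * (k * k)) by nia.
  rewrite <- (Nat.div_unique _ _ l (r * (k*k) + j)) by (auto; lia).
  rewrite <- (Nat.mod_unique _ _ l (r * (k*k) + j)) by (auto; lia).
  rewrite <- (Nat.div_unique (r * (k*k) + j) (k*k) r j) by (auto; lia).
  split; [auto|split; [auto|]].
  apply andb_true_intro; split; [apply Nat.leb_le; lia|apply Nat.ltb_lt].
  assert (l * ((k - 1) * (k * k)) <= (k-2) * ((k - 1) * (k * k))) by (apply Nat.mul_le_mono_r; lia).
  nia.
Qed.

Lemma decode k x : (2 <= k)%nat -> gnd k x = true ->
  exists l r j, valid k l r j /\ x = g k l r j.
Proof.
  intros Hk Hg. unfold gnd in Hg. apply andb_true_iff in Hg as [H1 H2].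
  apply Nat.leb_le in H1. apply Nat.ltb_lt in H2.
  unfold nn in H2.
  set (q := x - (k+1)). assert (HM : MM k <> 0) by (unfold MM; nia).
  assert (Hm : k * k <> 0) by nia.
  exists (q / MM k), ((q mod MM k) / (k*k)), ((q mod MM k) mod (k*k)).
  pose proof (Nat.div_mod q (MM k) HM). pose proof (Nat.mod_upper_bound q (MM k) HM).
  pose proof (Nat.div_mod (q mod MM k) (k*k) Hm). pose proof (Nat.mod_upper_bound (q mod MM k) (k*k) Hm).
  split; [split; [|split]|].
  - assert (q / MM k < k - 1); [|lia]. apply Nat.Div0.div_lt_upper_bound. unfold q. lia.
  - assert (q mod MM k / (k*k) < k - 1); [|lia]. apply Nat.Div0.div_lt_upper_bound.
    unfold MM in *. lia.
  - auto.
  - unfold g, mm. unfold q in *. lia.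
Qed.

Lemma g_lb k l r j : (k + 1 <= g k l r j)%nat.
Proof. unfold g; lia. Qed.

Lemma g_ub k l r j : (2 <= k)%nat -> valid k l r j -> (g k l r j < nn k)%nat.
Proof. intros Hk Hv. pose proof (code k l r j Hk Hv) as [_ [_ H]].
  unfold gnd in H. apply andb_true_iff in H as [_ H]. apply Nat.ltb_lt; auto. Qed.

Lemma down_g k l r j : (2 <= k)%nat -> valid k l r j ->
  down k (g k l r j) = if l =? 0 then r + 1 else g k (l - 1) r j.
Proof.
  intros Hk Hv. unfold down. destruct (code k l r j Hk Hv) as [-> [-> _]].
  destruct l; simpl; auto. unfold g. rewrite Nat.mul_succ_l. replace (S l - 1) with l by lia. lia.
Qed.

Lemma top_g k l r j : (2 <= k)%nat -> valid k l r j -> top k (g k l r j) = (l =? k - 2).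
Proof. intros Hk Hv. unfold top. destruct (code k l r j Hk Hv) as [-> _]. auto. Qed.

Lemma gnd_small k x : (x <= k)%nat -> gnd k x = false.
Proof. intros H. unfold gnd. destruct (Nat.leb_spec (k+1) x); [lia|auto]. Qed.

Lemma gnd_large k x : (nn k <= x)%nat -> gnd k x = false.
Proof. intros H. unfold gnd. destruct (Nat.ltb_spec x (nn k)); [lia|]. apply andb_false_r. Qed.

Lemma g_inj k l r j l' r' j' : (2 <= k)%nat -> valid k l r j -> valid k l' r' j' ->
  g k l r j = g k l' r' j' -> l = l' /\ r = r' /\ j = j'.
Proof.
  intros Hk Hv Hv' E. pose proof (code k l r j Hk Hv) as [A1 [A2 _]].
  pose proof (code k l' r' j' Hk Hv') as [B1 [B2 _]]. rewrite E in A1, A2.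
  assert (l = l') by congruence. assert (r = r') by lia. clear A1 A2 B1 B2. subst l r. split; auto. split; auto.
  unfold g in E. apply Nat.add_cancel_l in E. auto.
Qed.

Ltac bsplit := repeat match goal with
  | H : (_ || _)%bool = true |- _ => apply orb_true_iff in H as [H|H]
  | H : (_ && _)%bool = true |- _ => apply andb_true_iff in H as [H ?]
  | H : (_ =? _) = true |- _ => apply Nat.eqb_eq in H
  | H : (_ <? _) = true |- _ => apply Nat.ltb_lt in H
  end.

Lemma adj_g k l r j y : (2 <= k)%nat -> valid k l r j -> adj k (g k l r j) y = true ->
  (l = 0 /\ y = r + 1) \/ (0 < l /\ y = g k (l - 1) r j) \/ (l = k - 2 /\ y = k) \/
  (l < k - 2 /\ y = g k (l + 1) r j)%nat.
Proof.
  intros Hk Hv H. pose proof (g_lb k l r j) as Hlb. unfold adj, E in H.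
  rewrite down_g, top_g in H by auto.
  destruct (code k l r j Hk Hv) as [_ [_ Hg]]. rewrite Hg in H. simpl in H.
  destruct (Nat.eqb_spec l 0) as [Hl0|Hl0]; bsplit; try lia.
  all: destruct (decode k y Hk H) as [l' [r' [j' [Hv' ->]]]];
    rewrite down_g in H0 by auto; destruct (Nat.eqb_spec l' 0); [unfold valid in Hv'; lia|];
    assert (Hv'' : valid k (l'-1) r' j') by (unfold valid in *; lia);
    destruct (g_inj k _ _ _ _ _ _ Hk Hv Hv'' H0) as [? [? ?]]; subst;
    right; right; right; unfold valid in Hv'; split; [lia|]; f_equal; lia.
Qed.

Lemma adj_main k x y : (2 <= k)%nat -> (1 <= x <= k - 1)%nat -> adj k x y = true ->
  y = (x - 1)%nat \/ y = (x + 1)%nat \/ exists j, (j < k * k)%nat /\ y = g k 0 (x - 1) j.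
Proof.
  intros Hk Hx H. unfold adj, E in H. rewrite (gnd_small k x) in H by lia. simpl in H.
  rewrite orb_false_r in H. bsplit; try lia.
  all: destruct (decode k y Hk H) as [l' [r' [j' [Hv' ->]]]].
  all: try (rewrite down_g in H0 by auto; destruct (Nat.eqb_spec l' 0);
    [subst; right; right; exists j'; unfold valid in Hv'; split; [lia|]; f_equal; lia
    |pose proof (g_lb k (l'-1) r' j'); lia]).
  all: lia.
Qed.

Lemma adj_a k y : (2 <= k)%nat -> adj k k y = true ->
  y = (k - 1)%nat \/ exists r j, valid k (k - 2) r j /\ y = g k (k - 2) r j.
Proof.
  intros Hk H. unfold adj, E in H. rewrite (gnd_small k k) in H by lia. simpl in H.
  rewrite orb_false_r in H. bsplit; try lia.
  all: destruct (decode k y Hk H) as [l' [r' [j' [Hv' ->]]]].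
  all: try (rewrite top_g in * by auto; bsplit; subst; right; exists r', j'; auto; fail).
  all: rewrite down_g in * by auto; destruct (Nat.eqb_spec l' 0);
    [unfold valid in Hv'; lia|pose proof (g_lb k (l'-1) r' j'); lia].
Qed.

Lemma adj_sym k x y : adj k x y = adj k y x.
Proof. unfold adj; apply orb_comm. Qed.

Lemma adj_path k x : (1 <= x <= k)%nat -> adj k x (x - 1) = true.
Proof. intros H. unfold adj, E. apply orb_true_iff; left. apply orb_true_iff; left. apply orb_true_iff; left.
  apply andb_true_iff; split; [apply Nat.eqb_eq|apply Nat.ltb_lt]; lia. Qed.

Lemma adj_gdown k l r j : (2 <= k)%nat -> valid k l r j ->
  adj k (g k l r j) (if l =? 0 then r + 1 else g k (l - 1) r j) = true.
Proof. intros Hk Hv. unfold adj, E. rewrite <- down_g by auto.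
  destruct (code k l r j Hk Hv) as [_ [_ ->]]. rewrite Nat.eqb_refl. simpl. rewrite !orb_true_r. reflexivity. Qed.

Lemma adj_gtop k r j : (2 <= k)%nat -> valid k (k - 2) r j -> adj k (g k (k - 2) r j) k = true.
Proof. intros Hk Hv. unfold adj, E. rewrite top_g by auto.
  destruct (code k _ r j Hk Hv) as [_ [_ ->]]. rewrite !Nat.eqb_refl. simpl. rewrite !orb_true_r. reflexivity. Qed.

Lemma adj_bound k x y : (2 <= k)%nat -> adj k x y = true -> (x < nn k /\ y < nn k)%nat.
Proof.
  intros Hk.
  assert (Hn : (k < nn k)%nat) by (unfold nn, MM; nia).
  assert (HE : forall x y, E k x y = true -> (x < nn k /\ y < nn k)%nat).
  { intros a c H. unfold E in H. bsplit.
    - lia.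
    - destruct (decode k a Hk H) as [l' [r' [j' [Hv' ->]]]]. pose proof (g_ub k _ _ _ Hk Hv') as Hu.
      rewrite down_g in H0 by auto. destruct (l' =? 0); rewrite H0.
      + unfold valid in Hv'; lia.
      + assert (Hv2 : valid k (l'-1) r' j') by (unfold valid in *; lia). pose proof (g_ub k _ _ _ Hk Hv2). lia.
    - destruct (decode k a Hk H) as [l' [r' [j' [Hv' ->]]]]. pose proof (g_ub k _ _ _ Hk Hv'). lia. }
  unfold adj. intros H. apply orb_true_iff in H as [H|H]; apply HE in H; lia.
Qed.

Lemma adj_irrefl k x : (2 <= k)%nat -> adj k x x = false.
Proof.
  intros Hk. unfold adj. rewrite orb_diag. unfold E.
  destruct (Nat.eqb_spec x (x+1)); [lia|]. simpl.
  destruct (gnd k x) eqn:G; simpl; auto.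
  destruct (decode k x Hk G) as [l' [r' [j' [Hv' ->]]]]. pose proof (g_lb k l' r' j').
  rewrite down_g by auto. destruct (Nat.eqb_spec (g k l' r' j') k); [lia|]. rewrite andb_false_r, orb_false_r.
  destruct (Nat.eqb_spec l' 0); apply Nat.eqb_neq; [unfold valid in Hv'; lia|]. intro HH.
  assert (Hv2 : valid k (l'-1) r' j') by (unfold valid in *; lia).
  destruct (g_inj k _ _ _ _ _ _ Hk Hv' Hv2 HH). lia.
Qed.

Lemma simple_ok k : (2 <= k)%nat -> simple_graph (nn k) (adj k).
Proof.
  intros Hk. split; [|split].
  - intros x y H. apply adj_bound; auto.
  - intros; apply adj_sym.
  - intros; apply adj_irrefl; auto.
Qed.

Lemma reach0 k : (2 <= k)%nat -> forall x, (x < nn k)%nat -> reach (adj k) x 0.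
Proof.
  intros Hk x. induction x as [x IH] using lt_wf_ind. intros Hx.
  destruct (Nat.eq_dec x 0) as [->|H0]; [apply reach_refl|].
  destruct (Nat.le_gt_cases x k) as [Hxk|Hxk].
  - apply reach_trans with (x - 1)%nat. apply reach_edge, adj_path; lia. apply IH; lia.
  - assert (G : gnd k x = true).
    { unfold gnd. apply andb_true_intro; split; [apply Nat.leb_le|apply Nat.ltb_lt]; lia. }
    destruct (decode k x Hk G) as [l [r [j [Hv ->]]]].
    pose proof (adj_gdown k l r j Hk Hv) as Ha.
    apply reach_trans with (if l =? 0 then r + 1 else g k (l - 1) r j)%nat.
    apply reach_edge; auto.
    destruct (Nat.eqb_spec l 0).
    + unfold valid in Hv. apply IH; [pose proof (g_lb k l r j); lia|]. pose proof (g_ub k l r j Hk Hv). lia.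
    + assert (Hv2 : valid k (l-1) r j) by (unfold valid in *; lia).
      pose proof (g_ub k _ _ _ Hk Hv2). apply IH; auto.
      pose proof (g_inj k l r j (l-1) r j Hk Hv Hv2).
      unfold g. destruct l; [lia|]. rewrite Nat.mul_succ_l. replace (S l - 1)%nat with l by lia. unfold MM. nia.
Qed.

Lemma connected_ok k : (2 <= k)%nat -> connected (nn k) (adj k).
Proof.
  intros Hk x y Hx Hy. apply reach_trans with 0%nat. apply reach0; auto.
  apply reach_sym. apply adj_sym. apply reach0; auto.
Qed.

Definition phi k x := if x <=? k then x else Nat.max (rpos k x + 1) (lpos k x + 2).

Lemma phi_g k l r j : (2 <= k)%nat -> valid k l r j -> phi k (g k l r j) = Nat.max (r + 2) (l + 2).
Proof. intros Hk Hv. unfold phi. pose proof (g_lb k l r j).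
  destruct (Nat.leb_spec (g k l r j) k); [lia|]. destruct (code k l r j Hk Hv) as [-> [-> _]].
  f_equal; lia. Qed.

Lemma phi_small k x : (x <= k)%nat -> phi k x = x.
Proof. intros H. unfold phi. destruct (Nat.leb_spec x k); lia. Qed.

Lemma phi_lip k : (2 <= k)%nat -> forall x y, adj k x y = true -> (phi k x <= phi k y + 1)%nat.
Proof.
  intros Hk.
  assert (HE : forall x y, E k x y = true -> (phi k x <= phi k y + 1 /\ phi k y <= phi k x + 1)%nat).
  { intros x y H. unfold E in H. bsplit.
    - rewrite !phi_small by lia. lia.
    - destruct (decode k x Hk H) as [l [r [j [Hv ->]]]]. rewrite phi_g by auto.
      rewrite down_g in H0 by auto. destruct (Nat.eqb_spec l 0); subst y.
      + unfold valid in Hv; rewrite phi_small by lia. lia.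
      + assert (Hv2 : valid k (l-1) r j) by (unfold valid in *; lia). rewrite phi_g by auto. lia.
    - destruct (decode k x Hk H) as [l [r [j [Hv ->]]]]. rewrite phi_g by auto. subst y.
      rewrite top_g in H1 by auto. apply Nat.eqb_eq in H1. unfold valid in Hv. rewrite phi_small by lia. lia. }
  intros x y H. unfold adj in H. apply orb_true_iff in H as [H|H]; apply HE in H; lia.
Qed.

Definition dl (x : nat) := rev (seq 0 x).

Lemma dl_walk k x : (x <= k)%nat -> walk (adj k) x (dl x) /\ last (dl x) x = 0%nat /\ length (dl x) = x.
Proof.
  induction x; intros Hx. - simpl; auto.
  - assert (D : dl (S x) = x :: dl x) by (unfold dl; rewrite seq_S, rev_app_distr; reflexivity).
    rewrite D. destruct (IHx ltac:(lia)) as [W [L N]]. split; [|split].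
    + split; auto. replace x with (S x - 1)%nat at 2 by lia. apply adj_path; lia.
    + rewrite last_cons; auto.
    + simpl; auto.
Qed.

Lemma geo_hd k gp : (2 <= k)%nat -> geodesic_system (nn k) (adj k) 0 gp -> hd 0 (gp k) = (k - 1)%nat.
Proof.
  intros Hk Hg. assert (Hkn : (k < nn k)%nat) by (unfold nn, MM; nia).
  destruct (Hg k Hkn ltac:(lia)) as [W [L M]].
  destruct (dl_walk k k (le_n k)) as [W' [L' N']].
  specialize (M _ W' L'). rewrite N' in M.
  destruct (gp k) as [|y l] eqn:Eg.
  - simpl in L. lia.
  - simpl. destruct W as [Hy Wl]. rewrite last_cons in L.
    pose proof (walk_lb (adj k) (phi k) 0 (phi_lip k Hk) eq_refl l y Wl L). simpl in M.
    destruct (adj_a k y Hk Hy) as [->|[r [j [Hv ->]]]]; auto.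
    rewrite phi_g in H by auto. unfold valid in Hv. lia.
Qed.
Open Scope R_scope.

Lemma fsum_adj_lin n (adj : nat -> nat -> bool) x (f : nat -> R) c d :
  fsum n (fun y => if adj x y then c * f y + d else 0) =
  c * fsum n (fun y => if adj x y then f y else 0) + d * deg n adj x.
Proof.
  unfold deg. rewrite !fsum_scal, <- fsum_plus. apply fsum_ext; intros; destruct (adj x y); ring.
Qed.

Lemma lower_local n adj b gp a (h : nat -> R) delta x : x <> a -> 0 < deg n adj x ->
  0 <= fsum n (fun y => if adj x y then h x - h y + delta else 0) ->
  (1 - h x) - delta <= Top n adj b gp a (fun y => 1 - h y) x.
Proof.
  intros Hx Hd H. rewrite Top_nonexc by auto.
  replace (fsum n (fun y => if adj x y then h x - h y + delta else 0)) with
    (1 * fsum n (fun y => if adj x y then 1 - h y else 0) + (h x - 1 + delta) * deg n adj x) in H.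
  2:{ rewrite <- fsum_adj_lin. apply fsum_ext; intros; destruct (adj x y); ring. }
  apply (Rmult_le_reg_r (deg n adj x)); auto. rewrite Rmult_assoc, Rinv_l by (apply Rgt_not_eq; lra). nra.
Qed.

Lemma upper_local n adj b gp a (w : nat -> R) A Del x : x <> a -> 0 < deg n adj x -> 0 <= Del ->
  Del <= fsum n (fun y => if adj x y then A - w y else 0) ->
  Top n adj b gp a w x <= A - Del / INR n.
Proof.
  intros Hx Hd HD H. rewrite Top_nonexc by auto. pose proof (deg_le n adj x) as Hn.
  replace (fsum n (fun y => if adj x y then A - w y else 0)) with
    (-1 * fsum n (fun y => if adj x y then w y else 0) + A * deg n adj x) in H.
  2:{ rewrite <- fsum_adj_lin. apply fsum_ext; intros; destruct (adj x y); ring. }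
  set (S := fsum n (fun y => if adj x y then w y else 0)) in *.
  assert (S * / deg n adj x <= A - Del / deg n adj x).
  { apply (Rmult_le_reg_r (deg n adj x)); auto. unfold Rdiv.
    rewrite Rmult_minus_distr_r, !Rmult_assoc, Rinv_l by (apply Rgt_not_eq; lra). lra. }
  assert (Del / INR n <= Del / deg n adj x).
  { unfold Rdiv. apply Rmult_le_compat_l; auto. apply Rinv_le_contravar; auto. }
  lra.
Qed.

Definition Hp k r := / (INR (k + 1)) ^ r.
Definition hh k x := if (x <? k)%nat then Hp k x else if (x =? k)%nat then 0
  else Hp k (rpos k x) * INR (k - 1 - lpos k x) / INR k.

Lemma Hp_pos k r : 0 < Hp k r.
Proof. unfold Hp. apply Rinv_0_lt_compat, pow_lt, lt_0_INR; lia. Qed.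

Lemma Hp_S k r : Hp k r = INR (k + 1) * Hp k (S r).
Proof. unfold Hp. simpl. rewrite Rinv_mult. rewrite <- Rmult_assoc, Rinv_r, Rmult_1_l; auto.
  apply not_0_INR; lia. Qed.

Lemma Hp_le k r : Hp k (S r) <= Hp k r.
Proof. rewrite (Hp_S k r). pose proof (Hp_pos k (S r)). assert (1 <= INR (k+1)) by (apply (le_INR 1); lia). nra. Qed.

Lemma Hp_mono k r s : (r <= s)%nat -> Hp k s <= Hp k r.
Proof. induction 1; [lra|]. pose proof (Hp_le k m); lra. Qed.

Lemma hh_main k x : (x < k)%nat -> hh k x = Hp k x.
Proof. intros H. unfold hh. destruct (Nat.ltb_spec x k); [auto|lia]. Qed.

Lemma hh_k k : hh k k = 0.
Proof. unfold hh. rewrite Nat.ltb_irrefl, Nat.eqb_refl. auto. Qed.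

Lemma hh_g k l r j : (2 <= k)%nat -> valid k l r j ->
  hh k (g k l r j) = Hp k (r + 1) * INR (k - 1 - l) / INR k.
Proof. intros Hk Hv. unfold hh. pose proof (g_lb k l r j).
  destruct (Nat.ltb_spec (g k l r j) k); [lia|]. destruct (Nat.eqb_spec (g k l r j) k); [lia|].
  destruct (code k l r j Hk Hv) as [-> [-> _]]. auto. Qed.

Lemma hh_nonneg k x : (2 <= k)%nat -> 0 <= hh k x.
Proof. intros Hk. unfold hh. destruct (x <? k)%nat; [left; apply Hp_pos|].
  destruct (x =? k)%nat; [lra|]. pose proof (Hp_pos k (rpos k x)). pose proof (pos_INR (k - 1 - lpos k x)).
  assert (0 < INR k) by (apply lt_0_INR; lia).
  unfold Rdiv. apply Rmult_le_pos; [nra|]. left; apply Rinv_0_lt_compat; auto. Qed.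

Lemma hh_le1 k x : (2 <= k)%nat -> hh k x <= 1.
Proof. intros Hk. unfold hh.
  assert (forall r, Hp k r <= 1) by (intros r; pose proof (Hp_mono k 0 r ltac:(lia)); unfold Hp in *; simpl in *; lra).
  destruct (x <? k)%nat; auto. destruct (x =? k)%nat; [lra|].
  assert (INR (k - 1 - lpos k x) <= INR k) by (apply le_INR; lia).
  assert (0 < INR k) by (apply lt_0_INR; lia). pose proof (Hp_pos k (rpos k x)). specialize (H (rpos k x)).
  apply (Rmult_le_reg_r (INR k)); auto. unfold Rdiv. rewrite Rmult_assoc, Rinv_l by lra.
  pose proof (pos_INR (k - 1 - lpos k x)). nra. Qed.

Definition dlt k := Hp k (k - 1).

Lemma adj_true_sym k x y : adj k y x = true -> adj k x y = true.
Proof. rewrite adj_sym; auto. Qed.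

Lemma adj_g0 k r j : (2 <= k)%nat -> valid k 0 r j -> adj k (g k 0 r j) (r + 1) = true.
Proof. intros Hk Hv. exact (adj_gdown k 0 r j Hk Hv). Qed.

Lemma lower_drift_main k r : (2 <= k)%nat -> (1 <= r <= k - 1)%nat ->
  0 <= fsum (nn k) (fun y => if adj k r y then hh k r - hh k y + dlt k else 0).
Proof.
  intros Hk Hr. set (F := fun y => if adj k r y then hh k r - hh k y + dlt k else 0).
  set (s := g k 0 (r - 1) 0).
  assert (Hv : forall j, (j < k * k)%nat -> valid k 0 (r - 1) j) by (intros; unfold valid; lia).
  assert (Hsj : forall j, (s + j = g k 0 (r - 1) j)%nat) by (intros; unfold s, g; lia).
  assert (Hkk : (0 < k * k)%nat) by nia.
  assert (Hs : (s + k * k <= nn k)%nat).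
  { pose proof (g_ub k 0 (r-1) (k*k-1) Hk (Hv (k*k-1)%nat ltac:(lia))). rewrite <- Hsj in H. lia. }
  assert (Hzs : (r - 1 < s)%nat) by (unfold s; pose proof (g_lb k 0 (r-1) 0); lia).
  assert (Hd : 0 <= dlt k) by (left; apply Hp_pos).
  pose proof (fsum_block (nn k) F (r - 1) s (k * k) ltac:(lia) Hs ltac:(lia)) as HB.
  assert (Hk0 : 0 < INR k) by (apply lt_0_INR; lia).
  assert (Hblk : forall j, (j < k * k)%nat -> Hp k r / INR k <= F (s + j)%nat).
  { intros j Hj. unfold F. rewrite Hsj. pose proof (adj_g0 k (r-1) j Hk (Hv j Hj)) as Ha. replace (r - 1 + 1)%nat with r in Ha by lia.
    rewrite (adj_true_sym k _ _ Ha).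
    rewrite hh_main, hh_g by (auto; lia). replace (r - 1 + 1)%nat with r by lia.
    replace (k - 1 - 0)%nat with (k - 1)%nat by lia. rewrite minus_INR by lia. change (INR 1) with 1.
    replace (Hp k r - Hp k r * (INR k - 1) / INR k) with (Hp k r / INR k) by (field; lra). lra. }
  assert (Hsum : INR k * Hp k r <= fsum (k * k) (fun j => F (s + j)%nat)).
  { eapply Rle_trans; [|apply (fsum_le _ (fun _ => Hp k r / INR k)); auto].
    rewrite fsum_const, mult_INR. right; field; lra. }
  assert (Hz : F (r - 1)%nat = Hp k r - INR (k + 1) * Hp k r + dlt k).
  { unfold F. rewrite adj_path by lia.
    rewrite !hh_main by lia. replace (Hp k (r - 1)) with (INR (k+1) * Hp k r). auto.
    rewrite (Hp_S k (r-1)). f_equal. f_equal. lia. }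
  replace (INR (k+1)) with (INR k + 1) in Hz by (rewrite plus_INR; simpl; ring).
  assert (HB' : F (r - 1)%nat + fsum (k * k) (fun j => F (s + j)%nat) <= fsum (nn k) F).
  { apply HB. intros y Hy Hyz Hyb. unfold F. destruct (adj k r y) eqn:Ea; [|lra].
    destruct (adj_main k r y Hk Hr Ea) as [->|[->|[j [Hj ->]]]].
    - lia.
    - rewrite hh_main by lia. destruct (Nat.eq_dec (r + 1) k) as [E|E].
      + rewrite E, hh_k. pose proof (Hp_pos k r); lra.
      + rewrite hh_main by lia. replace (r+1)%nat with (S r) by lia. pose proof (Hp_le k r); lra.
    - exfalso. apply Hyb. rewrite <- Hsj. lia. }
  lra.
Qed.

Definition dn k l r j := if (l =? 0)%nat then (r + 1)%nat else g k (l - 1) r j.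
Definition upv k l r j := if (l =? k - 2)%nat then k else g k (l + 1) r j.

Lemma adj_dn k l r j : (2 <= k)%nat -> valid k l r j -> adj k (g k l r j) (dn k l r j) = true.
Proof. intros; apply adj_gdown; auto. Qed.

Lemma adj_up k l r j : (2 <= k)%nat -> valid k l r j -> adj k (g k l r j) (upv k l r j) = true.
Proof.
  intros Hk Hv. unfold upv. destruct (Nat.eqb_spec l (k-2)).
  - subst. apply adj_gtop; auto.
  - assert (Hv2 : valid k (l+1) r j) by (unfold valid in *; lia).
    pose proof (adj_gdown k (l+1) r j Hk Hv2) as H.
    destruct (Nat.eqb_spec (l+1) 0); [lia|]. replace (l + 1 - 1)%nat with l in H by lia.
    apply adj_true_sym; auto.
Qed.

Lemma dn_ub k l r j : (2 <= k)%nat -> valid k l r j -> (dn k l r j < nn k)%nat.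
Proof. intros Hk Hv. apply (adj_bound k (g k l r j)). auto. apply adj_dn; auto. Qed.

Lemma up_ub k l r j : (2 <= k)%nat -> valid k l r j -> (upv k l r j < nn k)%nat.
Proof. intros Hk Hv. apply (adj_bound k (g k l r j)). auto. apply adj_up; auto. Qed.

Lemma dn_neq_up k l r j : (2 <= k)%nat -> valid k l r j -> dn k l r j <> upv k l r j.
Proof.
  intros Hk Hv. unfold dn, upv. destruct (Nat.eqb_spec l 0); destruct (Nat.eqb_spec l (k-2)).
  - unfold valid in Hv; lia.
  - pose proof (g_lb k (l+1) r j); unfold valid in Hv; lia.
  - pose proof (g_lb k (l-1) r j); lia.
  - intro HH. assert (valid k (l-1) r j) by (unfold valid in *; lia).
    assert (valid k (l+1) r j) by (unfold valid in *; lia).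
    destruct (g_inj k _ _ _ _ _ _ Hk H H0 HH). lia.
Qed.

Lemma adj_g_only k l r j y : (2 <= k)%nat -> valid k l r j -> adj k (g k l r j) y = true ->
  y = dn k l r j \/ y = upv k l r j.
Proof.
  intros Hk Hv H. destruct (adj_g k l r j y Hk Hv H) as [[? ?]|[[? ?]|[[? ?]|[? ?]]]]; unfold dn, upv.
  - left. subst. auto.
  - left. destruct (Nat.eqb_spec l 0); [lia|auto].
  - right. subst. rewrite Nat.eqb_refl. auto.
  - right. destruct (Nat.eqb_spec l (k-2)); [lia|auto].
Qed.

Lemma hh_dn k l r j : (2 <= k)%nat -> valid k l r j ->
  hh k (dn k l r j) = Hp k (r + 1) * INR (k - l) / INR k.
Proof.
  intros Hk Hv. assert (0 < INR k) by (apply lt_0_INR; lia). unfold dn. destruct (Nat.eqb_spec l 0).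
  - subst. unfold valid in Hv. rewrite hh_main by lia. rewrite Nat.sub_0_r. field; lra.
  - assert (valid k (l-1) r j) by (unfold valid in *; lia). rewrite hh_g by auto.
    do 3 f_equal. lia.
Qed.

Lemma hh_up k l r j : (2 <= k)%nat -> valid k l r j ->
  hh k (upv k l r j) = Hp k (r + 1) * INR (k - 2 - l) / INR k.
Proof.
  intros Hk Hv. assert (0 < INR k) by (apply lt_0_INR; lia). unfold upv. destruct (Nat.eqb_spec l (k-2)).
  - subst. rewrite hh_k. replace (k - 2 - (k - 2))%nat with 0%nat by lia. simpl. field; lra.
  - assert (valid k (l+1) r j) by (unfold valid in *; lia). rewrite hh_g by auto.
    do 3 f_equal. lia.
Qed.

Lemma lower_drift_g k l r j : (2 <= k)%nat -> valid k l r j ->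
  0 <= fsum (nn k) (fun y => if adj k (g k l r j) y then hh k (g k l r j) - hh k y + dlt k else 0).
Proof.
  intros Hk Hv. set (x := g k l r j).
  eapply Rle_trans; [|apply (fsum_two _ _ (dn k l r j) (upv k l r j))].
  - unfold x. rewrite adj_dn, adj_up by auto. rewrite hh_g, hh_dn, hh_up by auto.
    assert (Hd : 0 <= dlt k) by (left; apply Hp_pos).
    assert (0 < INR k) by (apply lt_0_INR; lia).
    unfold valid in Hv.
    replace (INR (k - l)) with (INR (k - 1 - l) + 1) by (rewrite <- S_INR; f_equal; lia).
    replace (INR (k - 1 - l)) with (INR (k - 2 - l) + 1) by (rewrite <- S_INR; f_equal; lia).
    replace (Hp k (r + 1) * (INR (k - 2 - l) + 1) / INR k - Hp k (r + 1) * (INR (k - 2 - l) + 1 + 1) / INR k + dlt k +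
      (Hp k (r + 1) * (INR (k - 2 - l) + 1) / INR k - Hp k (r + 1) * INR (k - 2 - l) / INR k + dlt k))
      with (2 * dlt k) by (field; lra). lra.
  - apply dn_ub; auto.
  - apply up_ub; auto.
  - apply dn_neq_up; auto.
  - intros y Hy H1 H2. destruct (adj k x y) eqn:Ea; [|lra].
    destruct (adj_g_only k l r j y Hk Hv Ea); lia.
Qed.

Fixpoint fL (N : R) (R0 : nat) (r : nat) : R :=
  match r with 0%nat => 0 | S r' => fL N R0 r' + N ^ (R0 - r') end.

Lemma fL_S N R0 r : fL N R0 (S r) = fL N R0 r + N ^ (R0 - r).
Proof. reflexivity. Qed.

Lemma fL_mono N R0 r s : 1 <= N -> (r <= s)%nat -> fL N R0 r <= fL N R0 s.
Proof. intros HN. induction 1; [lra|]. rewrite fL_S. pose proof (pow_le N (R0 - m) ltac:(lra)). lra. Qed.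

Lemma fL_nonneg N R0 r : 1 <= N -> 0 <= fL N R0 r.
Proof. intros HN. apply (fL_mono N R0 0 r HN). lia. Qed.

Lemma upper_local2 n adj b gp a (lam : nat -> nat) R0 x y0 :
  x <> a -> (1 <= n)%nat -> (y0 < n)%nat -> adj x y0 = true -> (lam y0 + 1 = lam x)%nat ->
  (forall y, adj x y = true -> (lam y <= lam x + 1)%nat) -> (lam x <= R0)%nat ->
  Top n adj b gp a (fun y => fL (INR n) R0 (lam y)) x <= fL (INR n) R0 (lam x) - / INR n.
Proof.
  intros Hx Hn Hy0 Ha0 Hl0 Hall HR.
  set (N := INR n). assert (HN : 1 <= N) by (apply (le_INR 1); auto).
  set (L := lam x). fold L in Hl0, Hall, HR.
  eapply Rle_trans.
  - apply (upper_local n adj b gp a _ (fL N R0 (S L)) (fL N R0 (S L) - fL N R0 (lam y0)) x Hx).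
    + pose proof (deg_ge_term n adj x y0 Hy0 Ha0); lra.
    + pose proof (fL_mono N R0 (lam y0) (S L) HN ltac:(lia)); lra.
    + pose proof (fsum_one n (fun y => if adj x y then fL N R0 (S L) - fL N R0 (lam y) else 0) y0 Hy0) as HH.
      cbv beta in HH. rewrite Ha0 in HH. apply HH.
      intros y _ _. destruct (adj x y) eqn:E; [|lra].
      specialize (Hall y E). assert (Hly : (lam y <= S L)%nat) by lia.
      pose proof (fL_mono N R0 (lam y) (S L) HN Hly); lra.
  - replace (lam y0) with (L - 1)%nat by lia.
    replace (S L) with (S (S (L - 1))) by lia. rewrite !fL_S. replace (S (L - 1)) with L by lia.
    replace (R0 - (L - 1))%nat with (S (R0 - L)) by lia. simpl pow.
    set (P := N ^ (R0 - L)). assert (1 <= P) by (apply pow_R1_Rle; lra).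
    assert (HfL : fL N R0 L = fL N R0 (L - 1) + N * P).
    { replace L with (S (L - 1)) at 1 by lia. rewrite fL_S. replace (R0 - (L - 1))%nat with (S (R0 - L)) by lia. reflexivity. }
    rewrite HfL. fold N.
    replace (fL N R0 (L - 1) + N * P + P - (fL N R0 (L - 1) + N * P + P - fL N R0 (L - 1)) / N)
      with (fL N R0 (L - 1) + N * P + P - P - P / N) by (field; lra).
    assert (/ N <= P / N) by (unfold Rdiv; rewrite <- (Rmult_1_l (/ N)) at 1; apply Rmult_le_compat_r; [left; apply Rinv_0_lt_compat; lra|lra]).
    lra.
Qed.

Definition lam k x := if (x <=? k)%nat then x else (lpos k x + rpos k x + 1)%nat.

Lemma lam_small k x : (x <= k)%nat -> lam k x = x.
Proof. intros H. unfold lam. destruct (Nat.leb_spec x k); lia. Qed.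

Lemma lam_g k l r j : (2 <= k)%nat -> valid k l r j -> lam k (g k l r j) = (l + r + 2)%nat.
Proof. intros Hk Hv. unfold lam. pose proof (g_lb k l r j).
  destruct (Nat.leb_spec (g k l r j) k); [lia|]. destruct (code k l r j Hk Hv) as [-> [-> _]]. lia. Qed.

Lemma nn_gt k : (2 <= k)%nat -> (k < nn k)%nat.
Proof. intros. unfold nn, MM. nia. Qed.

Lemma gnd_of k x : (k < x)%nat -> (x < nn k)%nat -> gnd k x = true.
Proof. intros. unfold gnd. apply andb_true_intro; split; [apply Nat.leb_le|apply Nat.ltb_lt]; lia. Qed.

Lemma upper_drift k gp x : (2 <= k)%nat -> (x < nn k)%nat -> x <> 0%nat -> x <> k ->
  Top (nn k) (adj k) 0 gp k (fun y => fL (INR (nn k)) (2 * k) (lam k y)) x <=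
  fL (INR (nn k)) (2 * k) (lam k x) - / INR (nn k).
Proof.
  intros Hk Hx H0 Hxk. pose proof (nn_gt k Hk).
  destruct (Nat.le_gt_cases x k) as [Hle|Hgt].
  - apply (upper_local2 _ _ _ _ _ _ _ x (x - 1)); try lia.
    + apply adj_path; lia.
    + rewrite !lam_small; lia.
    + intros y Ha. destruct (adj_main k x y Hk ltac:(lia) Ha) as [->|[->|[j [Hj ->]]]].
      * rewrite !lam_small; lia.
      * rewrite !lam_small; lia.
      * rewrite lam_g by (unfold valid; lia). rewrite lam_small; lia.
    + rewrite lam_small; lia.
  - destruct (decode k x Hk (gnd_of k x Hgt Hx)) as [l [r [j [Hv ->]]]].
    apply (upper_local2 _ _ _ _ _ _ _ _ (dn k l r j)); try lia.
    + apply dn_ub; auto.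
    + apply adj_dn; auto.
    + rewrite lam_g by auto. unfold dn. destruct (Nat.eqb_spec l 0).
      * unfold valid in Hv. rewrite lam_small; lia.
      * rewrite lam_g by (unfold valid in *; lia). lia.
    + intros y Ha. rewrite lam_g by auto. destruct (adj_g_only k l r j y Hk Hv Ha) as [->| ->].
      * unfold dn. destruct (Nat.eqb_spec l 0).
        -- unfold valid in Hv. rewrite lam_small; lia.
        -- rewrite lam_g by (unfold valid in *; lia). lia.
      * unfold upv. destruct (Nat.eqb_spec l (k-2)).
        -- rewrite lam_small; lia.
        -- rewrite lam_g by (unfold valid in *; lia). lia.
    + rewrite lam_g by auto. unfold valid in Hv. lia.
Qed.

Lemma lower_drift k gp x : (2 <= k)%nat -> (x < nn k)%nat -> x <> 0%nat -> x <> k ->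
  (1 - hh k x) - dlt k <= Top (nn k) (adj k) 0 gp k (fun y => 1 - hh k y) x.
Proof.
  intros Hk Hx H0 Hxk. pose proof (nn_gt k Hk).
  destruct (Nat.le_gt_cases x k) as [Hle|Hgt].
  - apply lower_local; auto.
    + pose proof (deg_ge_term (nn k) (adj k) x (x-1) ltac:(lia) (adj_path k x ltac:(lia))); lra.
    + apply lower_drift_main; lia.
  - destruct (decode k x Hk (gnd_of k x Hgt Hx)) as [l [r [j [Hv ->]]]].
    apply lower_local; auto.
    + pose proof (deg_ge_term (nn k) (adj k) _ _ (dn_ub k l r j Hk Hv) (adj_dn k l r j Hk Hv)); lra.
    + apply lower_drift_g; auto.
Qed.

Theorem theorem1p1 :
  exists c : R, 0 < c /\
    forall N : nat, exists n : nat, (N <= n)%nat /\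
      exists (adj : nat -> nat -> bool) (a b : nat),
        simple_graph n adj /\ connected n adj /\ (a < n)%nat /\ (b < n)%nat /\
        forall gp : nat -> list nat, geodesic_system n adj b gp ->
          exists E : R,
            expected_hitting_time n adj b (fun x => Nat.eqb x a) gp a E /\
            E >= c * exp (Rpower (INR n) (1/4) * ln (INR n) / 100).
Proof.
  exists (1/4). split; [lra|]. intros N.
  set (k := (N + 2)%nat). assert (Hk : (2 <= k)%nat) by (unfold k; lia).
  pose proof (nn_gt k Hk) as Hkn.
  exists (nn k). split; [unfold k in *; lia|].
  exists (adj k), k, 0%nat. split; [apply simple_ok; auto|]. split; [apply connected_ok; auto|].
  split; [auto|]. split; [lia|].
  intros gp Hgp. pose proof (geo_hd k gp Hk Hgp) as Hhd.
  assert (Hbnd : forall x y, adj k x y = true -> (y < nn k)%nat) by (intros; apply (adj_bound k x y); auto).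
  assert (Hhdn : (hd 0%nat (gp k) < nn k)%nat) by (rewrite Hhd; lia).
  set (D := ((k + 1) ^ (k - 1))%nat).
  assert (HD1 : (1 <= D)%nat) by (unfold D; apply Nat.pow_le_mono_l with (c := (k-1)%nat) in Hk; simpl in *;
     pose proof (Nat.pow_le_mono_l 1 (k+1) (k-1) ltac:(lia)); rewrite Nat.pow_1_l in *; lia).
  assert (Hn1 : (1 <= nn k)%nat) by lia.
  assert (Hup : forall t, sum_f_R0 (tail_prob (nn k) (adj k) 0 (fun z => Nat.eqb z k) gp k) t <=
     fL (INR (nn k)) (2 * k) (lam k k) / / INR (nn k)).
  { apply (upper_gen (nn k) (adj k) 0 gp k (fun y => fL (INR (nn k)) (2 * k) (lam k y)) (/ INR (nn k)) Hbnd Hkn ltac:(lia)).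
    - simpl. reflexivity.
    - intros; apply fL_nonneg. apply (le_INR 1); auto.
    - apply Rinv_0_lt_compat, lt_0_INR; lia.
    - intros x Hx Hx0. destruct (Nat.eq_dec x k) as [->|Hxk].
      + rewrite Top_exc by auto. rewrite Hhd, !lam_small by lia.
        pose proof (fL_S (INR (nn k)) (2*k) (k-1)) as HS. replace (S (k-1)) with k in HS by lia. rewrite HS.
        assert (HN : 1 <= INR (nn k)) by (apply (le_INR 1); auto).
        assert (1 <= INR (nn k) ^ (2 * k - (k - 1))) by (apply pow_R1_Rle; lra).
        assert (/ INR (nn k) <= 1) by (rewrite <- Rinv_1; apply Rinv_le_contravar; lra). lra.
      + apply upper_drift; auto. }
  assert (Hlow : forall t, 1 - INR t * dlt k <= tail_prob (nn k) (adj k) 0 (fun z => Nat.eqb z k) gp k t).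
  { apply (lower_gen (nn k) (adj k) 0 gp k (fun y => 1 - hh k y) (dlt k) Hbnd Hkn ltac:(lia) Hhdn).
    - cbv beta. rewrite hh_main by lia. unfold Hp. simpl. lra.
    - intros y _. pose proof (hh_nonneg k y Hk). lra.
    - cbv beta. rewrite hh_k. lra.
    - left; apply Hp_pos.
    - cbv beta. rewrite Hhd, hh_main by lia. unfold dlt. lra.
    - intros x Hx H0 Hxk. apply lower_drift; auto. }
  destruct (final_sum (tail_prob (nn k) (adj k) 0 (fun z => Nat.eqb z k) gp k) (fL (INR (nn k)) (2 * k) (lam k k) / / INR (nn k)) D) as [E [HE HE4]].
  - intros t. unfold tail_prob. apply fsum_nonneg. intros. apply surv_nonneg; auto.
  - exact Hup.
  - exact HD1.
  - intros t. specialize (Hlow t). unfold dlt, Hp in Hlow. unfold D. rewrite pow_INR. exact Hlow.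
  - exists E. split; [exact HE|].
    assert (Hn4 : (nn k <= k ^ 4)%nat).
    { unfold nn, MM. simpl. nia. }
    pose proof (real_bound k (nn k) Hk Hn1 Hn4). fold D in H. lra.
Qed.
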